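(* Let $B,n'\ge1$ be integers, $n=2Bn'$, and $s\ge 0$. Let $f:\{0,1\}^{n'}\to\{\pm\tfrac12\}$ be a balanced function with $I(f)\le s$. Let $W=\mathrm{Span}\{f_z : z\in\{0,1\}^B\}\subseteq\mathcal{N}=\mathbb{C}^{2^n}$, where $f_z$ is defined below. Then $W$ has dimension at least $2^B$ and $W$ is $(\mathcal{E}_{\mathrm{bitflip}},2s)$ immune.
   Context: A function $g:\{0,1\}^m\to\mathbb{C}$ is identified with the vector $\sum_x g(x)|x\rangle\in\mathbb{C}^{2^m}$. For $g:\{0,1\}^m\to\mathbb{C}$ and $i\in[m]$, $I_i(g)=\mathbb{E}_{x\in\{0,1\}^m}|g(x)-g(x\oplus e_i)|^2$ (with $e_i$ the $i$-th unit vector) and $I(g)=\max_i I_i(g)$. Balanced means $f$ takes each of its two values on exactly half the inputs. Partition $[n]$ into $2B$ consecutive blocks of length $n'$; for $x\in\{0,1\}^n$, $i\in[B]$, $b\in\{0,1\}$, let $x_{i,b}\in\{0,1\}^{n'}$ be the restriction of $x$ to the $(2i-1+b)$-th block. For $z\in\{0,1\}^B$ set $f_z(x)=f(x_{1,z_1})\cdots f(x_{B,z_B})$. For $i\in[n]$, $S\subseteq\{0,1\}^{n-1}$, $E_{i,S}$ is the linear operator with $E_{i,S}|x\rangle=|x\oplus e_i\rangle$ if $(x_1,\dots,x_{i-1},x_{i+1},\dots,x_n)\in S$ and $E_{i,S}|x\rangle=|x\rangle$ otherwise; $\mathcal{E}_{\mathrm{bitflip}}=\{E_{i,S}: i\in[n],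 S\subseteq\{0,1\}^{n-1}\}$. A subspace $\mathcal{M}$ is $(\mathcal{E},\varepsilon)$ immune if for every $X\in\mathcal{E}$ and every $\phi\in\mathcal{M}$, $|\phi^*X\phi|\ge(1-\varepsilon)|\phi^*\phi|$. *)

(* Defs.v *)
From mathcomp Require Import all_boot all_order all_algebra.
From mathcomp Require Import zify.
Set Implicit Arguments. Unset Strict Implicit. Unset Printing Implicit Defensive.
Import Order.TTheory GRing.Theory Num.Theory.
Local Open Scope ring_scope.

Definition bits (m : nat) := {ffun 'I_m -> bool}.

Definition flip (m : nat) (x : bits m) (i : 'I_m) : bits m :=
  [ffun j => x j (+) (j == i)].

Section Defs.
Variable C : numClosedFieldType.

(* the Hilbert space C^{2^m}, identified with functions {0,1}^m -> C *)
Definition cvec (m : nat) := {ffun bits m -> C^o}.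

Definition infl_i (m : nat) (g : bits m -> C) (i : 'I_m) : C :=
  (#|{: bits m}|%:R)^-1 * \sum_(x : bits m) `|g x - g (flip x i)| ^+ 2.

Definition infl (m : nat) (g : bits m -> C) : C :=
  \big[Num.max/0]_(i < m) infl_i g i.

Definition balanced_pm_half (m : nat) (f : bits m -> C) : Prop :=
  (forall x, f x = 2^-1 \/ f x = - 2^-1) /\
  (#|[set x | f x == 2^-1]| * 2 = #|{: bits m}|)%N /\
  (#|[set x | f x == - 2^-1]| * 2 = #|{: bits m}|)%N.

Lemma blockpos_proof (B n' : nat) (i : 'I_B) (b : bool) (j : 'I_n') :
  ((2 * i + b) * n' + j < 2 * B * n')%N.
Proof.
have hi := ltn_ord i; have hj := ltn_ord j.
case: b => /=; nia.
Qed.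

Definition blockpos (B n' : nat) (i : 'I_B) (b : bool) (j : 'I_n') : 'I_(2 * B * n') :=
  Ordinal (blockpos_proof i b j).

(* x_{i,b}: restriction of x to the (2i-1+b)-th block (1-indexed i) *)
Definition xblock (B n' : nat) (x : bits (2 * B * n')) (i : 'I_B) (b : bool) : bits n' :=
  [ffun j => x (blockpos i b j)].

Definition fz (B n' : nat) (f : bits n' -> C) (z : bits B) : cvec (2 * B * n') :=
  [ffun x => \prod_(i < B) f (xblock x i (z i))].

Definition Wspace (B n' : nat) (f : bits n' -> C) : {vspace cvec (2 * B * n')} :=
  <<[seq fz f z | z : bits B]>>%VS.

Definition drop_coord (n : nat) (i : 'I_n) (x : bits n) : bits n.-1 :=
  [ffun j => x (lift i j)].

Definition ket (n : nat) (x : bits n) : cvec n := [ffun y => (y == x)%:R].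

Definition E_bitflip (n : nat) (i : 'I_n) (S : {set bits n.-1}) (phi : cvec n) : cvec n :=
  \sum_(x : bits n) phi x *: ket (if drop_coord i x \in S then flip x i else x).

Definition dotc (n : nat) (phi psi : cvec n) : C := \sum_(x : bits n) (phi x)^* * psi x.

Definition bitflip_immune (n : nat) (M : {vspace cvec n}) (eps : C) : Prop :=
  forall (i : 'I_n) (S : {set bits n.-1}) (phi : cvec n), phi \in M ->
    (1 - eps) * `|dotc phi phi| <= `|dotc phi (E_bitflip i S phi)|.

End Defs.

(* Main.v *)
From Pilot Require Import Defs.
From mathcomp Require Import all_boot all_order all_algebra.
From mathcomp Require Import zify ring.
Import Order.TTheory GRing.Theory Num.Theory.
Local Open Scope ring_scope.
Import Pilot.Defs.
Set Implicit Arguments. Unset Strict Implicit. Unset Printing Implicit Defensive.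

Section Arith.
Variables B n' : nat.

Lemma pos_n' (p : 'I_(2 * B * n')) : (0 < n')%N.
Proof. have := ltn_ord p; move: (nat_of_ord p) => k h; rewrite lt0n; apply/eqP => e; by rewrite e muln0 in h. Qed.

Lemma pj_proof (p : 'I_(2 * B * n')) : (p %% n' < n')%N.
Proof. by rewrite ltn_pmod // (pos_n' p). Qed.

Lemma pi_proof (p : 'I_(2 * B * n')) : (p %/ n' %/ 2 < B)%N.
Proof.
have n0 := pos_n' p; have := ltn_ord p; move: (nat_of_ord p) => k h.
by rewrite !ltn_divLR // (mulnC B 2).
Qed.

Definition pj (p : 'I_(2 * B * n')) : 'I_n' := Ordinal (pj_proof p).
Definition pi (p : 'I_(2 * B * n')) : 'I_B := Ordinal (pi_proof p).
Definition pb (p : 'I_(2 * B * n')) : bool := odd (p %/ n').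

Lemma bp_decomp p : blockpos (pi p) (pb p) (pj p) = p.
Proof.
apply: val_inj => /=; rewrite /pb -modn2.
rewrite [(2 * _)%N]mulnC -divn_eq.
by rewrite -divn_eq.
Qed.

Lemma bp_pi i b j : pi (blockpos i b j) = i.
Proof.
apply: val_inj => /=.
have hj := ltn_ord j; have n0 : (0 < n')%N := leq_ltn_trans (leq0n j) hj.
rewrite (divnMDl _ _ n0) (divn_small hj) addn0 [(2 * i)%N]mulnC divnMDl //.
by case: (b); rewrite ?addn0.
Qed.

Lemma bp_pb i b j : pb (blockpos i b j) = b.
Proof.
rewrite /pb /=.
have hj := ltn_ord j; have n0 : (0 < n')%N := leq_ltn_trans (leq0n j) hj.
rewrite (divnMDl _ _ n0) (divn_small hj) addn0 oddD oddM /=.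
by case: b.
Qed.

Lemma bp_pj i b j : pj (blockpos i b j) = j.
Proof.
apply: val_inj => /=.
by rewrite modnMDl modn_small.
Qed.

Lemma bp_inj (i i' : 'I_B) (b b' : bool) (j j' : 'I_n') :
  (blockpos i b j == blockpos i' b' j') = [&& i == i', b == b' & j == j'].
Proof.
apply/eqP/idP => [e|/and3P[/eqP-> /eqP-> /eqP->] //].
have := congr1 pi e; have := congr1 pb e; have := congr1 pj e.
by rewrite !bp_pi !bp_pb !bp_pj => -> -> ->; rewrite !eqxx.
Qed.

End Arith.

Section Phi.
Variable C : numClosedFieldType.
Variables B n' : nat.
Local Notation N := (2 * B * n')%N.
Local Notation IB := ('I_B * bool)%type.

Definition blk (x : bits N) : {ffun IB -> bits n'} := [ffun ib => xblock x ib.1 ib.2].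
Definition unblk (X : {ffun IB -> bits n'}) : bits N := [ffun p => X (pi p, pb p) (pj p)].

Lemma blkK : cancel blk unblk.
Proof. by move=> x; apply/ffunP => p; rewrite !ffunE /= bp_decomp. Qed.

Lemma unblkK : cancel unblk blk.
Proof.
move=> X; apply/ffunP => [[i b]]; apply/ffunP => j.
by rewrite !ffunE /= bp_pi bp_pb bp_pj.
Qed.

Definition Phi (G : IB -> bits n' -> C) (x : bits N) : C :=
  \prod_(ib : IB) G ib (blk x ib).

Lemma sum_Phi G : \sum_x Phi G x = \prod_(ib : IB) \sum_y G ib y.
Proof.
rewrite bigA_distr_bigA /= (reindex blk) /=; last first.
  by apply: onW_bij; exists unblk; [apply: blkK | apply: unblkK].
by [].
Qed.

Lemma blk_flip x i b j ib :
  blk (flip x (blockpos i b j)) ib =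
  if ib == (i, b) then flip (blk x ib) j else blk x ib.
Proof.
case: ib => i' b'; apply/ffunP => j'; rewrite !ffunE /=.
rewrite bp_inj xpair_eqE.
by case: (i' == i); case: (b' == b); rewrite /= ?ffunE ?addbF.
Qed.

Lemma Phi_flip G x i b j :
  Phi G (flip x (blockpos i b j)) =
  Phi (fun ib y => G ib (if ib == (i, b) then flip y j else y)) x.
Proof. by apply: eq_bigr => ib _; rewrite blk_flip; case: eqP. Qed.

Lemma Phi_diff G i b j x :
  Phi G x - Phi (fun ib y => G ib (if ib == (i, b) then flip y j else y)) x =
  Phi (fun ib y => if ib == (i, b) then G ib y - G ib (flip y j) else G ib y) x.
Proof.
rewrite /Phi (bigD1 (i, b)) //= [X in _ - X](bigD1 (i, b)) //=.
rewrite [RHS](bigD1 (i, b)) //= !eqxx.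
rewrite [X in _ - _ * X](eq_bigr (fun i0 => G i0 (blk x i0))); last by move=> ib /negbTE ->.
rewrite [X in _ = _ * X](eq_bigr (fun i0 => G i0 (blk x i0))); last by move=> ib /negbTE ->.
by rewrite mulrBl.
Qed.

Definition vPhi G : cvec C N := [ffun x => Phi G x].

Lemma dot_Phi G H :
  dotc (vPhi G) (vPhi H) = \prod_(ib : IB) \sum_y (G ib y)^* * H ib y.
Proof.
rewrite /dotc -sum_Phi; apply: eq_bigr => x _.
by rewrite !ffunE /Phi rmorph_prod -big_split.
Qed.

End Phi.

Section Dot.
Variable C : numClosedFieldType.
Variable m : nat.
Variable T : finType.

Lemma dotc_sum (c d : T -> C) (u w : T -> cvec C m) :
  dotc (\sum_t c t *: u t) (\sum_t d t *: w t) =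
  \sum_t \sum_t' (c t)^* * d t' * dotc (u t) (w t').
Proof.
rewrite /dotc.
under eq_bigr => x _ do rewrite !sum_ffunE rmorph_sum mulr_suml.
rewrite exchange_big; apply: eq_bigr => t _.
under eq_bigr => x _ do rewrite mulr_sumr.
rewrite exchange_big; apply: eq_bigr => t' _.
rewrite mulr_sumr; apply: eq_bigr => x _.
rewrite !ffunE rmorphM /=.
rewrite /GRing.scale /=.
by rewrite mulrACA.
Qed.

Lemma dotc_orth (c : T -> C) (u : T -> cvec C m) :
  (forall t t', t != t' -> dotc (u t) (u t') = 0) ->
  dotc (\sum_t c t *: u t) (\sum_t c t *: u t) =
  \sum_t (c t)^* * c t * dotc (u t) (u t).
Proof.
move=> orth; rewrite dotc_sum; apply: eq_bigr => t _.
rewrite (bigD1 t) //= big1 ?addr0 // => t' ne.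
by rewrite orth ?mulr0 // eq_sym.
Qed.

Lemma dotc_ge0 (u : cvec C m) : 0 <= dotc u u.
Proof.
by apply: sumr_ge0 => x _; rewrite mulrC mul_conjC_ge0.
Qed.

End Dot.

Section Ebit.
Variable C : numClosedFieldType.
Variable m : nat.

Lemma flipK (i : 'I_m) : involutive (fun y : bits m => flip y i).
Proof. by move=> y; apply/ffunP => j; rewrite !ffunE addbK. Qed.

Lemma drop_flip (i : 'I_m) y : drop_coord i (flip y i) = drop_coord i y.
Proof.
apply/ffunP => j; rewrite !ffunE.
by rewrite eq_sym (negbTE (neq_lift i j)) addbF.
Qed.

Definition sig (i : 'I_m) (S : {set bits m.-1}) y :=
  if drop_coord i y \in S then flip y i else y.

Lemma sigK i S : involutive (sig i S).
Proof.
move=> y; rewrite /sig; case h: (drop_coord i y \in S); last by rewrite h.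
by rewrite drop_flip h flipK.
Qed.

Lemma E_apply i S (phi : cvec C m) y : E_bitflip i S phi y = phi (sig i S y).
Proof.
rewrite /E_bitflip sum_ffunE (bigD1 (sig i S y)) //= big1.
  by rewrite !ffunE -/(sig i S _) sigK eqxx addr0 /GRing.scale /= mulr1.
move=> x ne; rewrite !ffunE -/(sig i S _).
case: eqP => [e|]; last by rewrite /GRing.scale /= mulr0.
by rewrite e sigK eqxx in ne.
Qed.

Definition dflip (i : 'I_m) (phi : cvec C m) : cvec C m :=
  [ffun x => phi x - phi (flip x i)].

Lemma E_gap i S (phi : cvec C m) :
  2 * (dotc phi phi - dotc phi (E_bitflip i S phi)) =
  \sum_y (drop_coord i y \in S)%:R * ((dflip i phi y)^* * dflip i phi y).
Proof.
set a := fun y => (drop_coord i y \in S)%:R *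
   ((phi y)^* * (phi y - phi (flip y i))).
have -> : dotc phi phi - dotc phi (E_bitflip i S phi) = \sum_y a y.
  rewrite /dotc -sumrB; apply: eq_bigr => y _.
  rewrite E_apply /a /sig; case: (_ \in S).
    by rewrite mul1r mulrBr.
  by rewrite subrr mul0r.
rewrite mulr_natl mulr2n {2}(reindex_inj (inv_inj (flipK i))) -big_split /=.
apply: eq_bigr => y _; rewrite /a drop_flip flipK !ffunE rmorphB /=.
case: (_ \in S); last by rewrite !mul0r addr0.
rewrite !mul1r.
by ring.
Qed.

End Ebit.

Lemma le_maxr_real (C : numClosedFieldType) (x y : C) :
  x \is Num.real -> y \is Num.real -> x <= Num.max x y /\ y <= Num.max x y.
Proof. by move=> hx hy; case: (real_leP hx hy) => h; split => //; apply: ltW. Qed.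

Lemma bigmax_ge_seq (C : numClosedFieldType) (I : eqType) (r : seq I) (F : I -> C) :
  (forall i, 0 <= F i) -> forall j, j \in r -> F j <= \big[Num.max/0]_(i <- r) F i.
Proof.
move=> hF; elim: r => [//|x r IH] j; rewrite inE big_cons.
have hM : \big[Num.max/0]_(i <- r) F i \is Num.real.
  by apply: bigmax_real => // i _; apply: ger0_real.
have [h1 h2] := le_maxr_real (ger0_real (hF x)) hM.
case/orP => [/eqP -> //|jr].
by apply: le_trans h2; apply: IH.
Qed.

Lemma bigmax_ge (C : numClosedFieldType) m (F : 'I_m -> C) :
  (forall i, 0 <= F i) -> forall j, F j <= \big[Num.max/0]_(i < m) F i.
Proof. by move=> hF j; apply: bigmax_ge_seq => //; rewrite mem_index_enum. Qed.

Section Fprops.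
Variable C : numClosedFieldType.
Variable n' : nat.
Variable f : bits n' -> C.
Hypothesis hbal : balanced_pm_half f.

Lemma half_neq : (2^-1 : C) != - 2^-1.
Proof.
apply/eqP => e.
have : (2:C)^-1 + 2^-1 = 0 by rewrite {1}e addNr.
rewrite -{1 2}(mulr1 (2^-1)) -mulrDr -[1 + 1]/(2%:R) mulVf ?pnatr_eq0 //.
by move/eqP; rewrite oner_eq0.
Qed.

Lemma f_real y : (f y)^* = f y.
Proof.
by case: (hbal.1 y) => ->; rewrite ?rmorphN fmorphV /= conjC_nat.
Qed.

Lemma f_sq y : (f y)^* * f y = 2^-1 * 2^-1.
Proof. by rewrite f_real; case: (hbal.1 y) => ->; rewrite ?mulrNN. Qed.

Lemma sum_f : \sum_y f y = 0.
Proof.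
rewrite (bigID (fun y => f y == 2^-1)) /=.
rewrite (eq_bigr (fun _ => 2^-1)); last by move=> y /eqP.
rewrite [X in _ + X](eq_bigr (fun _ => - 2^-1)); last first.
  by move=> y; case: (hbal.1 y) => -> //; rewrite eqxx.
rewrite !sumr_const.
have -> : #|[pred y | ~~ (f y == 2^-1)]| = #|[set x | f x == - 2^-1]|.
  apply: eq_card => y; rewrite !inE.
  case: (hbal.1 y) => ->; rewrite ?eqxx /=.
    by rewrite (negbTE half_neq).
  by rewrite eq_sym (negbTE half_neq).
have -> : #|[pred y | f y == 2^-1]| = #|[set x | f x == 2^-1]|.
  by apply: eq_card => y; rewrite !inE.
have e : #|[set x | f x == 2^-1]| = #|[set x | f x == - 2^-1]|.
  have [_ [h1 h2]] := hbal; rewrite -h2 in h1.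
  by move/eqP: h1; rewrite eqn_pmul2r // => /eqP.
by rewrite e mulNrn addrN.
Qed.

Lemma infl_bound (s : C) (j : 'I_n') : infl f <= s ->
  \sum_y (f y - f (flip y j))^* * (f y - f (flip y j)) <= #|{: bits n'}|%:R * s.
Proof.
move=> hs.
have hN : (0 : C) < #|{: bits n'}|%:R.
  by rewrite ltr0n; apply/card_gt0P; exists [ffun => false].
have h1 : infl_i f j <= s.
  apply: le_trans hs.
  have hF : forall i, 0 <= infl_i f i.
    move=> i; rewrite /infl_i; apply: mulr_ge0; first by rewrite invr_ge0 ltW.
    by apply: sumr_ge0 => y _; rewrite exprn_ge0.
  exact: (bigmax_ge hF j).
rewrite -ler_pdivrMl // (eq_bigr (fun y => `|f y - f (flip y j)| ^+ 2)) //.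
by move=> y _; rewrite normCKC.
Qed.

End Fprops.

Section Gen2.
Variable C : numClosedFieldType.
Variable m : nat.
Variable T : finType.

Lemma dflip_sum (p : 'I_m) (c : T -> C) (u : T -> cvec C m) :
  dflip p (\sum_t c t *: u t) = \sum_t c t *: dflip p (u t).
Proof.
apply/ffunP => x; rewrite !ffunE !sum_ffunE -sumrB; apply: eq_bigr => t _.
by rewrite !ffunE /GRing.scale /= mulrBr.
Qed.

Lemma dotc_sumr (v : cvec C m) (c : T -> C) (u : T -> cvec C m) :
  dotc v (\sum_t c t *: u t) = \sum_t c t * dotc v (u t).
Proof.
rewrite /dotc.
under eq_bigr => x _ do rewrite sum_ffunE mulr_sumr.
rewrite exchange_big; apply: eq_bigr => t _.
rewrite mulr_sumr; apply: eq_bigr => x _.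
by rewrite !ffunE /GRing.scale /= mulrCA.
Qed.

Lemma dotc0 (v : cvec C m) : dotc v 0 = 0.
Proof. by rewrite /dotc big1 // => x _; rewrite ffunE mulr0. Qed.

End Gen2.

Section Main.
Variable C : numClosedFieldType.
Variables B n' : nat.
Variable f : bits n' -> C.
Hypothesis hbal : balanced_pm_half f.
Variable s : C.
Hypothesis hs0 : 0 <= s.
Hypothesis hinfl : infl f <= s.
Local Notation N := (2 * B * n')%N.
Local Notation IB := ('I_B * bool)%type.

Definition Gz (z : bits B) : IB -> bits n' -> C :=
  fun ib y => if z ib.1 == ib.2 then f y else 1.

Lemma fzE (z : bits B) : fz f z = vPhi (Gz z).
Proof.
apply/ffunP => x; rewrite !ffunE /Phi.
rewrite (_ : \prod_(ib : IB) _ = \prod_(i < B) \prod_(c : bool) Gz z (i, c) (blk x (i, c))); last first.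
  by rewrite pair_bigA; apply: eq_bigr => -[].
apply: eq_bigr => i _; rewrite big_bool /Gz /= !ffunE /=.
by case: (z i); rewrite /= ?mulr1 ?mul1r.
Qed.

Definition Dz (z : bits B) (i : 'I_B) (b : bool) (j : 'I_n') : IB -> bits n' -> C :=
  fun ib y => if ib == (i, b) then Gz z ib y - Gz z ib (flip y j) else Gz z ib y.

Lemma dfzE (z : bits B) (i : 'I_B) (b : bool) (j : 'I_n') : dflip (blockpos i b j) (fz f z) = vPhi (Dz z i b j).
Proof.
apply/ffunP => x; rewrite fzE !ffunE Phi_flip Phi_diff.
by [].
Qed.

Lemma Phi_orth0 (G H : IB -> bits n' -> C) (ib0 : IB) : \sum_y (G ib0 y)^* * H ib0 y = 0 ->
  dotc (vPhi G) (vPhi H) = 0 :> C.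
Proof. by move=> h; rewrite dot_Phi (bigD1 ib0) //= h mul0r. Qed.

Lemma neq_ex (z w : bits B) : z != w -> exists k, z k != w k.
Proof.
move=> ne.
have : ~~ [forall k, z k == w k].
  by apply: contra ne => /forallP h; apply/eqP/ffunP => k; apply/eqP/h.
by rewrite negb_forall => /existsP [k hk]; exists k.
Qed.

Lemma sum_f_conj : \sum_y (f y)^* * 1 = 0.
Proof. by under eq_bigr => y _ do rewrite mulr1; rewrite -rmorph_sum (sum_f hbal) rmorph0. Qed.

Lemma orth_fz (z w : bits B) : z != w -> dotc (fz f z) (fz f w) = 0.
Proof.
move=> /neq_ex [k hk]; rewrite !fzE; apply: (Phi_orth0 (ib0 := (k, z k))).
rewrite /Gz /= eqxx eq_sym (negbTE hk).
exact: sum_f_conj.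
Qed.

Lemma orth_dfz (z w : bits B) (i : 'I_B) (b : bool) (j : 'I_n') : z != w ->
  dotc (dflip (blockpos i b j) (fz f z)) (dflip (blockpos i b j) (fz f w)) = 0.
Proof.
move=> /neq_ex [k hk]; rewrite !dfzE.
have [eki|nki] := eqVneq k i.
  subst k; apply: (Phi_orth0 (ib0 := (i, b))); rewrite /Dz /Gz /= eqxx.
  case: (eqVneq (z i) b) => hz.
    have hw : (w i == b) = false by apply/negbTE; rewrite -hz eq_sym.
    by rewrite hw big1 // => y _; rewrite subrr mulr0.
  by rewrite big1 // => y _; rewrite subrr rmorph0 mul0r.
apply: (Phi_orth0 (ib0 := (k, z k))); rewrite /Dz /Gz /= xpair_eqE (negbTE nki) /=.
rewrite eqxx eq_sym (negbTE hk).
exact: sum_f_conj.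
Qed.

Lemma card_pos : (0 : C) < #|{: bits n'}|%:R.
Proof. by rewrite ltr0n; apply/card_gt0P; exists [ffun => false]. Qed.

Lemma sigG (z : bits B) (ib : IB) : \sum_y (Gz z ib y)^* * Gz z ib y =
  (if z ib.1 == ib.2 then 2^-1 * 2^-1 else 1) * #|{: bits n'}|%:R.
Proof.
rewrite /Gz; case: ifP => _.
  by rewrite (eq_bigr (fun _ => 2^-1 * 2^-1)) ?sumr_const ?mulr_natr // => y _; rewrite f_sq.
by rewrite (eq_bigr (fun _ => 1)) ?sumr_const ?mulr_natr // => y _; rewrite rmorph1 mulr1.
Qed.

Lemma half2_gt0 : (0 : C) < 2^-1 * 2^-1.
Proof. by rewrite mulr_gt0 // invr_gt0 ltr0n. Qed.

Lemma fz_pos (z : bits B) : 0 < dotc (fz f z) (fz f z).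
Proof.
rewrite fzE dot_Phi; apply: prodr_gt0 => ib _; rewrite sigG.
apply: mulr_gt0; last exact: card_pos.
by case: ifP => _; rewrite ?half2_gt0 ?ltr01.
Qed.

Lemma dfz_bound (z : bits B) (i : 'I_B) (b : bool) (j : 'I_n') :
  dotc (dflip (blockpos i b j) (fz f z)) (dflip (blockpos i b j) (fz f z))
  <= 2 * (2 * s) * dotc (fz f z) (fz f z).
Proof.
rewrite dfzE fzE !dot_Phi (bigD1 (i, b)) //= [X in _ <= _ * X](bigD1 (i, b)) //=.
rewrite [X in _ * X <= _](eq_bigr (fun ib => \sum_y (Gz z ib y)^* * Gz z ib y)); last first.
  by move=> ib /negbTE hne; apply: eq_bigr => y _; rewrite /Dz hne.
rewrite [X in _ <= X]mulrA; apply: ler_wpM2r.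
  by apply: prodr_ge0 => ib _; apply: sumr_ge0 => y _; rewrite mulrC mul_conjC_ge0.
rewrite sigG /Dz /= eqxx /Gz /=.
case: ifP => _.
  apply: le_trans (@infl_bound C n' f s j hinfl) _.
  rewrite le_eqVlt; apply/orP; left; apply/eqP.
  by field.
rewrite big1; last by move=> y _; rewrite subrr mulr0.
rewrite !mulr_ge0 // ?ler0n //.
Qed.

End Main.

Theorem theorem2 (C : numClosedFieldType) (B n' : nat) (s : C)
    (f : bits n' -> C) :
  (1 <= B)%N -> (1 <= n')%N -> 0 <= s ->
  balanced_pm_half f -> infl f <= s ->
  (2 ^ B <= \dim (@Wspace C B n' f))%N /\ bitflip_immune (@Wspace C B n' f) (2 * s).
Proof.
move=> hB hn' hs hbal hinfl.
set X := [seq fz f z | z : bits B].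
have [e [eX [ue se]]] : exists e : seq (bits B),
    X = map (fz f) e /\ uniq e /\ size e = (2 ^ B)%N.
  exists (enum (mem (bits B))); split => //.
  split; first exact: enum_uniq.
  by rewrite -cardE card_ffun card_bool card_ord.
pose z0 : bits B := [ffun => false].
have Xn : forall k, (k < size e)%N -> X`_k = fz f (nth z0 e k).
  by move=> k hk; rewrite eX (nth_map z0).
have hi : forall i : 'I_(size X), (i < size e)%N.
  by move=> i; rewrite -(size_map (fz f) e) -eX.
pose u (i : 'I_(size X)) := fz f (nth z0 e i).
have zne : forall i i' : 'I_(size X), i != i' -> nth z0 e i != nth z0 e i'.
  by move=> i i' ne; rewrite nth_uniq ?hi.
have orth_u : forall i i', i != i' -> dotc (u i) (u i') = 0.
  by move=> i i' ne; apply: (orth_fz hbal); apply: zne.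
split.
  have hfree : free (in_tuple X).
    apply/freeP => k hk i.
    have := congr1 (dotc (u i)) hk.
    rewrite dotc0 (eq_bigr (fun t => k t *: u t)); last first.
      by move=> t _; rewrite /= Xn ?hi.
    rewrite dotc_sumr (bigD1 i) //= big1 ?addr0; last first.
      by move=> t ne; rewrite orth_u ?mulr0 // eq_sym.
    move/eqP; rewrite mulf_eq0 => /orP[/eqP //|].
    by rewrite gt_eqF // fz_pos.
  move/eqP: hfree => /= hd.
  by rewrite /Wspace -/X hd eX size_map se.
move=> p S phi hphi.
have hc := coord_span (X := in_tuple X) hphi.
set c := fun i => coord (in_tuple X) i phi.
have hphi' : phi = \sum_(i < size X) c i *: u i.
  by rewrite {1}hc; apply: eq_bigr => i _; rewrite /= Xn ?hi.
have hD : dotc phi phi = \sum_i (c i)^* * c i * dotc (u i) (u i).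
  by rewrite {1 2}hphi' dotc_orth.
have hDge : 0 <= dotc phi phi by apply: dotc_ge0.
have hDelta : dotc (dflip p phi) (dflip p phi) <= 2 * (2 * s) * dotc phi phi.
  rewrite hD mulr_sumr hphi' dflip_sum dotc_orth; last first.
    move=> i i' ne; rewrite -(bp_decomp p); apply: (orth_dfz hbal); exact: zne.
  apply: ler_sum => i _.
  rewrite mulrCA; apply: ler_wpM2l; first by rewrite mulrC mul_conjC_ge0.
  by rewrite -(bp_decomp p); apply: (dfz_bound hbal hs hinfl).
have hgap := E_gap p S phi.
set A := dotc phi phi - dotc phi (E_bitflip p S phi) in hgap.
have h2A : 2 * A <= dotc (dflip p phi) (dflip p phi).
  rewrite hgap; apply: ler_sum => y _.
  have h0 : 0 <= (dflip p phi y)^* * dflip p phi y by rewrite mulrC mul_conjC_ge0.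
  by case: (_ \in S); rewrite ?mul1r ?mul0r.
have hA0 : 0 <= 2 * A.
  rewrite hgap; apply: sumr_ge0 => y _; apply: mulr_ge0; first by rewrite ler0n.
  by rewrite mulrC mul_conjC_ge0.
have hA : A <= 2 * s * dotc phi phi.
  rewrite -(@ler_pM2l _ 2) ?ltr0n // mulrA.
  exact: le_trans h2A hDelta.
have -> : dotc phi (E_bitflip p S phi) = dotc phi phi - A by rewrite /A opprB addrC subrK.
rewrite (ger0_norm hDge).
apply: le_trans (real_ler_norm _).
  by rewrite mulrBl mul1r lerB.
apply: rpredB; apply: ger0_real => //.
by rewrite -(@pmulr_rge0 _ 2) ?ltr0n.
Qed.
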